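(* Let $X$ be as in the standing setting with skeleton $X_1,\dots,X_k$. If $x\in X$ does not lie in $\operatorname{span}X_i$ for any $i$, then there exist indices $i\ne j$ and points $x_i\in X_i$, $x_j\in X_j$ such that $x\in\operatorname{pos}\{x_i,x_j\}$.
   Context: Standing setting: $X\subset\mathbb R^n\setminus\{0\}$ is a finite set such that $0$ lies in the interior of $\operatorname{conv}X$, no element of $X$ is a positive multiple of another, and every $n+1$ points of $X$ are in good position. A finite set $A$ is in conical position if $0\notin\operatorname{conv}A$ and no point of $A$ lies in the positive hull (set of nonnegative linear combinations, denoted $\operatorname{pos}$) of the other points; it is in good position otherwise. A skeleton of $X$ is a collection of pairwise disjoint subsets $X_1,\dots,X_k\subseteq X$ such that each $X_i$ is the vertex set of a simplex whose relative interior contains $0$ and $\mathbb R^n=\operatorname{span}X_1\oplus\cdots\oplus\operatorname{span}X_k$. *)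

(* Defs.v *)
(* Points of R^n are row vectors 'rV[R]_n over R : realType.
   Finite sets of points are represented by sequences (membership = set). *)
From HB Require Import structures.
From mathcomp Require Import all_boot all_order all_algebra.
From mathcomp Require Import reals.
Set Implicit Arguments. Unset Strict Implicit. Unset Printing Implicit Defensive.
Import Order.TTheory GRing.Theory Num.Theory.
Local Open Scope ring_scope.

Section Defs.
Variables (R : realType) (n : nat).
Local Notation V := 'rV[R]_n.

Definition in_conv (A : seq V) (v : V) : Prop :=
  exists c : 'I_(size A) -> R,
    (forall i, 0 <= c i) /\ \sum_(i < size A) c i = 1 /\
    v = \sum_(i < size A) c i *: A`_i.

Definition in_aff (A : seq V) (v : V) : Prop :=
  exists c : 'I_(size A) -> R,
    \sum_(i < size A) c i = 1 /\ v = \sum_(i < size A) c i *: A`_i.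

Definition in_pos (A : seq V) (v : V) : Prop :=
  exists c : 'I_(size A) -> R,
    (forall i, 0 <= c i) /\ v = \sum_(i < size A) c i *: A`_i.

Definition in_interior_conv (A : seq V) (v : V) : Prop :=
  exists2 e : R, 0 < e &
    forall w : V, (forall j, `|w 0 j - v 0 j| < e) -> in_conv A w.

Definition in_relint_conv (A : seq V) (v : V) : Prop :=
  in_conv A v /\
  exists2 e : R, 0 < e &
    forall w : V, in_aff A w -> (forall j, `|w 0 j - v 0 j| < e) -> in_conv A w.

Definition aff_indep (A : seq V) : Prop :=
  uniq A /\
  forall c : 'I_(size A) -> R,
    \sum_(i < size A) c i = 0 -> \sum_(i < size A) c i *: A`_i = 0 ->
    forall i, c i = 0.

Definition conical_position (A : seq V) : Prop :=
  ~ in_conv A 0 /\ forall a, a \in A -> ~ in_pos (filter (predC1 a) A) a.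

Definition good_position (A : seq V) : Prop := ~ conical_position A.

Definition standing (X : seq V) : Prop :=
  [/\ 0 \notin X,
      in_interior_conv X 0,
      (forall x y, x \in X -> y \in X -> x != y ->
         ~ exists2 t : R, 0 < t & y = t *: x) &
      (forall A : seq V, uniq A -> size A = n.+1 -> {subset A <= X} ->
         good_position A)].

Definition skeleton (X : seq V) (k : nat) (Xs : 'I_k -> seq V) : Prop :=
  [/\ (forall i, {subset Xs i <= X}),
      (forall i j, i != j -> forall x, x \in Xs i -> x \notin Xs j),
      (forall i, aff_indep (Xs i) /\ in_relint_conv (Xs i) 0),
      (\sum_(i < k) <<Xs i>>)%VS = fullv &
      directv (\sum_(i < k) <<Xs i>>)%VS].

End Defs.

(* Main.v *)
Require Import Defs.
From mathcomp Require Import all_boot all_order all_algebra.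
From mathcomp Require Import reals.
From mathcomp Require Import ring lra.
From Stdlib Require Import IndefiniteDescription Classical.
Import Order.TTheory GRing.Theory Num.Theory.
Local Open Scope ring_scope.
Set Implicit Arguments. Unset Strict Implicit. Unset Printing Implicit Defensive.

Lemma fchoice (I T : Type) (P : I -> T -> Prop) :
  (forall i, exists t, P i t) -> exists f : I -> T, forall i, P i (f i).
Proof.
move=> H; exists (fun i => proj1_sig (constructive_indefinite_description _ (H i))).
move=> i; exact: proj2_sig.
Qed.

Section Aux.
Variables (R : realType) (n : nat).
Local Notation V := 'rV[R]_n.
Implicit Types (A : seq V) (v : V).

Definition fun_of A (c : 'I_(size A) -> R) (a : V) : R :=
  \sum_(i < size A | A`_i == a) c i.

Lemma fun_ofE A c (i : 'I_(size A)) : uniq A -> fun_of c (A`_i) = c i.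
Proof.
move=> uA; rewrite /fun_of (big_pred1 i) // => j /=.
by rewrite nth_uniq.
Qed.

Lemma sum_seq (T : nmodType) A (G : V -> T) :
  \sum_(a <- A) G a = \sum_(i < size A) G A`_i.
Proof. by rewrite (big_nth 0) big_mkord. Qed.

Lemma pos_fun A v : uniq A -> in_pos A v ->
  exists f : V -> R, (forall a, 0 <= f a) /\ v = \sum_(a <- A) f a *: a.
Proof.
move=> uA [c [c0 ->]]; exists (fun_of c); split.
  by move=> a; apply: sumr_ge0 => i _; apply: c0.
by rewrite sum_seq; apply: eq_bigr => i _; rewrite fun_ofE.
Qed.

Lemma conv_fun A v : uniq A -> in_conv A v ->
  exists f : V -> R, [/\ (forall a, 0 <= f a), \sum_(a <- A) f a = 1 &
     v = \sum_(a <- A) f a *: a].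
Proof.
move=> uA [c [c0 [c1 ->]]]; exists (fun_of c); split.
- by move=> a; apply: sumr_ge0 => i _; apply: c0.
- by rewrite sum_seq -c1; apply: eq_bigr => i _; rewrite fun_ofE.
by rewrite sum_seq; apply: eq_bigr => i _; rewrite fun_ofE.
Qed.

Lemma pos2 (a b v : V) (s t : R) : 0 <= s -> 0 <= t -> v = s *: a + t *: b ->
  in_pos [:: a; b] v.
Proof.
move=> s0 t0 ->; exists (fun i : 'I_2 => if val i == 0%N then s else t); split.
  by move=> i; case: ifP.
by rewrite !big_ord_recr big_ord0 /= add0r.
Qed.

Lemma aff_fun A : aff_indep A -> forall g : V -> R,
  \sum_(a <- A) g a = 0 -> \sum_(a <- A) g a *: a = 0 ->
  forall a, a \in A -> g a = 0.
Proof.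
move=> [uA H] g s0 v0 a aA.
have := H (fun i => g A`_i); rewrite -(sum_seq A (fun a => g a)) -(sum_seq A (fun a => g a *: a)).
move=> /(_ s0 v0) h.
have Hi : (index a A < size A)%N by rewrite index_mem.
by have := h (Ordinal Hi); rewrite /= nth_index.
Qed.

Lemma free_fun A : free A -> forall g : V -> R,
  \sum_(a <- A) g a *: a = 0 -> forall a, a \in A -> g a = 0.
Proof.
rewrite -[A]in_tupleE => /freeP H g v0 a aA.
have := H (fun i => g A`_i); rewrite -(sum_seq A (fun a => g a *: a)).
move=> /(_ v0) h.
have Hi : (index a A < size A)%N by rewrite index_mem.
by have := h (Ordinal Hi); rewrite /= nth_index.
Qed.

Lemma fun_free A : uniq A -> (forall g : V -> R,
  \sum_(a <- A) g a *: a = 0 -> forall a, a \in A -> g a = 0) -> free A.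
Proof.
move=> uA H; rewrite -[A]in_tupleE; apply/freeP => c hc i.
have := H (fun_of c); rewrite sum_seq.
rewrite (eq_bigr (fun i => c i *: A`_i)); last by move=> j _; rewrite fun_ofE.
move=> /(_ hc (A`_i) (mem_nth _ (ltn_ord i))).
by rewrite fun_ofE.
Qed.

Lemma span_fun A v : uniq A -> v \in <<A>>%VS ->
  exists c : V -> R, v = \sum_(a <- A) c a *: a.
Proof.
move=> uA; rewrite -[A]in_tupleE => /coord_span ->.
exists (fun_of (fun i => coord (in_tuple A) i v)); rewrite sum_seq.
by apply: eq_bigr => i _; rewrite fun_ofE.
Qed.

End Aux.
Section Aux2.
Variables (R : realType) (n : nat).
Local Notation V := 'rV[R]_n.
Implicit Types (A : seq V) (v : V).

Lemma relint_pos A : uniq A -> in_relint_conv A 0 ->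
  (0 < size A)%N /\ exists alpha : V -> R,
    (forall a, a \in A -> 0 < alpha a) /\ \sum_(a <- A) alpha a *: a = 0.
Proof.
move=> uA [[c [c0 [c1 e0]]] [e e_gt0 He]].
have m_gt0 : (0 < size A)%N.
  case: (size A) c c0 c1 e0 He => [|m] c c0 c1 _ _ //.
  by move: c1; rewrite big_ord0 => /eqP; rewrite eq_sym oner_eq0.
split=> //.
set m := size A in c c0 c1 e0 He m_gt0 *.
set b : V := \sum_(i < m) A`_i.
set S := \sum_(j < n) `|b 0 j|.
have S0 : 0 <= S by apply: sumr_ge0.
set M := 1 + S.
set d := e / (M + M).
have d_gt0 : 0 < d by rewrite divr_gt0 // addr_gt0 // ltr_pwDl.
have hd : d * (M + M) = e by rewrite /d divfK // gt_eqF // addr_gt0 // ltr_pwDl.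
pose c' (i : 'I_m) := (1 + d * m%:R) * c i - d.
have aff : in_aff A (- d *: b).
  exists c'; split.
    rewrite sumrB -mulr_sumr c1 sumr_const card_ord -mulr_natr; ring.
  under eq_bigr do rewrite /c' scalerBl -scalerA.
  by rewrite sumrB -scaler_sumr -e0 scaler0 sub0r -scaler_sumr scaleNr.
have near : forall j, `|(- d *: b) 0 j - (0 : V) 0 j| < e.
  move=> j; rewrite !mxE subr0 normrM normrN (gtr0_norm d_gt0).
  have hj : `|b 0 j| <= S.
    by rewrite /S (bigD1 j) //= lerDl sumr_ge0.
  rewrite -hd /M; nra.
have [d2 [d20 [d21 ed2]]] := He _ aff near.
exists (fun_of (fun i => d2 i + d)); split.
  move=> a aA; have Hi : (index a A < size A)%N by rewrite index_mem.
  rewrite -{1}(nth_index 0 aA) (fun_ofE (fun i => d2 i + d) (Ordinal Hi) uA).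
  by rewrite ltr_pwDr.
rewrite sum_seq.
rewrite (eq_bigr (fun i => (d2 i + d) *: A`_i)); last by move=> j _; rewrite fun_ofE.
under eq_bigr do rewrite scalerDl.
by rewrite big_split /= -ed2 -scaler_sumr scaleNr addNr.
Qed.

End Aux2.
Section Aux3.
Variables (R : realType) (n : nat).
Local Notation V := 'rV[R]_n.
Implicit Types (A : seq V) (v : V).

Lemma seq_argmin A (f : V -> R) : A != [::] ->
  exists2 q, q \in A & forall a, a \in A -> f q <= f a.
Proof.
elim: A => [//|a A IH] _.
case: (altP (A =P [::])) => [-> | /IH [q qA Hq]].
  by exists a; rewrite ?mem_seq1 // => b; rewrite mem_seq1 => /eqP->.
case: (lerP (f a) (f q)) => h.
  exists a; first exact: mem_head.
  move=> b; rewrite in_cons => /orP[/eqP->//|/Hq]; exact: le_trans.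
exists q; first by rewrite in_cons qA orbT.
move=> b; rewrite in_cons => /orP[/eqP->|/Hq//]; exact: ltW.
Qed.

Lemma drop_zero A p (g : V -> R) : uniq A -> p \in A -> g p = 0 ->
  \sum_(a <- A) g a *: a = \sum_(a <- filter (predC1 p) A) g a *: a.
Proof.
move=> uA pA gp; rewrite (bigD1_seq p) //= gp scale0r add0r big_filter.
by [].
Qed.

Lemma facet_indep A p (alpha : V -> R) : aff_indep A ->
  (forall a, a \in A -> 0 < alpha a) ->
  \sum_(a <- A) alpha a *: a = 0 -> p \in A ->
  forall g : V -> R, \sum_(a <- filter (predC1 p) A) g a *: a = 0 ->
  forall b, b \in filter (predC1 p) A -> g b = 0.
Proof.
move=> hA apos arel pA g g0 b bB.
have uA := hA.1.
set S := \sum_(a <- filter (predC1 p) A) g a.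
set T := \sum_(a <- A) alpha a.
have T_gt0 : 0 < T.
  rewrite /T (bigD1_seq p) //= ltr_pwDl ?apos //.
  rewrite big_seq_cond; apply: sumr_ge0 => a /andP[aA _].
  exact: ltW (apos _ aA).
set l := - S / T.
pose h a := (if a != p then g a else 0) + l * alpha a.
have hs : \sum_(a <- A) h a = 0.
  rewrite big_split /= -mulr_sumr -big_mkcond -big_filter -/S -/T /l.
  by field; rewrite gt_eqF.
have hv : \sum_(a <- A) h a *: a = 0.
  under eq_bigr do rewrite scalerDl -scalerA.
  rewrite big_split /= -scaler_sumr arel scaler0 addr0.
  rewrite -[RHS]g0 big_filter [RHS]big_mkcond /=; apply: eq_bigr => a _.
  by case: ifP => _ //; rewrite scale0r.
have hz := aff_fun hA hs hv.
have l0 : l = 0.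
  have := hz p pA; rewrite /h eqxx /= add0r => /eqP.
  by rewrite mulf_eq0 (gt_eqF (apos _ pA)) orbF => /eqP.
move: bB; rewrite mem_filter => /andP[/= bp bA].
by have := hz b bA; rewrite /h bp l0 mul0r addr0.
Qed.

End Aux3.
Section Aux4.
Variables (R : realType) (n : nat).
Local Notation V := 'rV[R]_n.
Implicit Types (A : seq V) (v : V).

Lemma facet_free A p (alpha : V -> R) : aff_indep A ->
  (forall a, a \in A -> 0 < alpha a) ->
  \sum_(a <- A) alpha a *: a = 0 -> p \in A -> free (filter (predC1 p) A).
Proof.
move=> hA apos arel pA; apply: fun_free; first exact: filter_uniq hA.1.
exact: facet_indep hA apos arel pA.
Qed.

Lemma facet_span A p (alpha : V -> R) : uniq A ->
  (forall a, a \in A -> 0 < alpha a) ->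
  \sum_(a <- A) alpha a *: a = 0 -> p \in A ->
  <<filter (predC1 p) A>>%VS = <<A>>%VS.
Proof.
move=> uA apos arel pA; apply/eqP; rewrite eqEsubv; apply/andP; split.
  by apply: sub_span => a; rewrite mem_filter => /andP[].
apply/span_subvP => a aA.
case: (altP (a =P p)) => [->|ap]; last by apply: memv_span; rewrite mem_filter /= ap.
have : p = - (alpha p)^-1 *: \sum_(a <- filter (predC1 p) A) alpha a *: a.
  move: arel; rewrite (bigD1_seq p) //= -big_filter => /eqP. rewrite addr_eq0 => /eqP h.
  by rewrite scaleNr -[p in LHS](scale1r p) -(mulVf (lt0r_neq0 (apos _ pA))) -scalerA h scalerN.
move=> hp; rewrite {1}hp; apply: rpredZ; rewrite big_seq; apply: rpred_sum => b bB; apply: rpredZ.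
exact: memv_span bB.
Qed.

Lemma facet_cone A (alpha c : V -> R) : uniq A ->
  (forall a, a \in A -> 0 < alpha a) ->
  \sum_(a <- A) alpha a *: a = 0 -> A != [::] ->
  exists q, exists c' : V -> R, [/\ q \in A, (forall a, a \in A -> 0 <= c' a),
     c' q = 0 & \sum_(a <- A) c a *: a = \sum_(a <- A) c' a *: a].
Proof.
move=> uA apos arel An0.
have [q qA Hq] := seq_argmin (fun a => c a / alpha a) An0.
set t := c q / alpha q.
exists q, (fun a => c a - t * alpha a); split => //.
- move=> a aA; rewrite subr_ge0.
  have := Hq a aA; rewrite -/t => h.
  have ha := apos a aA.
  by rewrite -(ler_pM2r ha) divfK ?gt_eqF // in h.
- by rewrite /t divfK ?subrr // gt_eqF ?apos.
under [RHS]eq_bigr do rewrite scalerBl -scalerA.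
by rewrite sumrB -scaler_sumr arel scaler0 subr0.
Qed.

End Aux4.
Section Setup.
Variables (R : realType) (n k : nat).
Local Notation V := 'rV[R]_n.
Variables (Xs : 'I_k -> seq V) (alpha : 'I_k -> V -> R).
Hypothesis haff : forall i, aff_indep (Xs i).
Hypothesis hpos : forall i a, a \in Xs i -> 0 < alpha i a.
Hypothesis hrel : forall i, \sum_(a <- Xs i) alpha i a *: a = 0.
Hypothesis hfull : (\sum_(i < k) <<Xs i>>)%VS = fullv.
Hypothesis hdir : directv (\sum_(i < k) <<Xs i>>)%VS.
Variable r : 'I_k -> V.
Hypothesis hr : forall i, r i \in Xs i.

Definition Bf i := filter (predC1 (r i)) (Xs i).
Definition Ff := \big[cat/[::]]_(i < k) Bf i.

Lemma F_sum (T : nmodType) (G : V -> T) :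
  \sum_(b <- Ff) G b = \sum_(i < k) \sum_(b <- Bf i) G b.
Proof.
rewrite /Ff (big_morph (fun s => \sum_(b <- s) G b) (fun s1 s2 => big_cat _ _ _ _ _) (big_nil _ _ _ _)).
by [].
Qed.

Lemma F_mem b : (b \in Ff) = [exists i, b \in Bf i].
Proof.
rewrite -has_pred1 /Ff (big_morph (has (pred1 b)) (fun s1 s2 => has_cat _ s1 s2) (erefl (has (pred1 b) [::]))).
rewrite big_orE; apply: eq_existsb => i; exact: has_pred1.
Qed.

Lemma B_span i : <<Bf i>>%VS = <<Xs i>>%VS.
Proof. exact: facet_span (haff i).1 (hpos (i:=i)) (hrel i) (hr i). Qed.

Lemma F_free : free Ff.
Proof.
apply: bigcat_free => [|i _].
  apply/directv_sum_independent => us Hus us0 i _.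
  move/directv_sum_independent: hdir; apply => // j _; rewrite -B_span; exact: Hus.
exact: facet_free (haff i) (hpos (i:=i)) (hrel i) (hr i).
Qed.

Lemma F_uniq : uniq Ff.
Proof. exact: free_uniq F_free. Qed.

Lemma F_size : size Ff = n.
Proof.
have := F_free; rewrite /free => /eqP <-.
rewrite /Ff span_bigcat (eq_bigr _ (fun i _ => B_span i)) hfull.
by rewrite dimvf dim_matrix [LHS]mul1n.
Qed.

Lemma F_indep (g : V -> R) : \sum_(b <- Ff) g b *: b = 0 -> forall b, b \in Ff -> g b = 0.
Proof. exact: free_fun F_free g. Qed.

End Setup.
Section Core.
Variables (R : realType) (n k : nat).
Local Notation V := 'rV[R]_n.
Variables (Xs : 'I_k -> seq V) (alpha : 'I_k -> V -> R) (X : seq V).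
Hypothesis haff : forall i, aff_indep (Xs i).
Hypothesis hpos : forall i a, a \in Xs i -> 0 < alpha i a.
Hypothesis hrel : forall i, \sum_(a <- Xs i) alpha i a *: a = 0.
Hypothesis hfull : (\sum_(i < k) <<Xs i>>)%VS = fullv.
Hypothesis hdir : directv (\sum_(i < k) <<Xs i>>)%VS.
Hypothesis hsub : forall i, {subset Xs i <= X}.
Hypothesis hdisj : forall i j, i != j -> forall b, b \in Xs i -> b \notin Xs j.
Hypothesis hgood : forall A : seq V, uniq A -> size A = n.+1 -> {subset A <= X} ->
  good_position A.
Variables (x : V) (y q : 'I_k -> V) (c : 'I_k -> V -> R).
Hypothesis xX : x \in X.
Hypothesis xnot : forall i, x \notin <<Xs i>>%VS.
Hypothesis hq : forall i, q i \in Xs i.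
Hypothesis hc : forall i a, a \in Xs i -> 0 <= c i a.
Hypothesis hcq : forall i, c i (q i) = 0.
Hypothesis hy : forall i, y i = \sum_(a <- Xs i) c i a *: a.
Hypothesis hx : x = \sum_(i < k) y i.

Lemma pos_point i : y i != 0 -> exists2 p, p \in Xs i & 0 < c i p.
Proof.
move=> yi; apply: NNPP => H; move/eqP: yi; apply.
rewrite hy big_seq big1 // => a aX.
have := hc aX; rewrite le_eqVlt => /orP[/eqP <-|h]; first by rewrite scale0r.
by case: H; exists a.
Qed.

Lemma core i0 j1 : j1 != i0 -> y j1 != 0 -> y i0 != 0 ->
  exists s, forall j, j != i0 -> forall b, b \in Xs j -> b != s -> c j b = 0.
Proof.
move=> j1i0 yj1 yi0.
have [p pX cp] := pos_point yi0.
have [b1 b1X cb1] := pos_point yj1.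
pose r j := if j == i0 then p else q j.
have hr : forall j, r j \in Xs j by move=> j; rewrite /r; case: ifP => [/eqP->|].
set B := Bf Xs r; set F := Ff Xs r.
have Fu : uniq F := F_uniq haff hpos hrel hdir hr.
have Fs : size F = n := F_size haff hpos hrel hfull hdir hr.
have Fi := F_indep haff hpos hrel hdir hr.
have BX : forall j b, b \in B j -> b \in Xs j.
  by move=> j b; rewrite /B /Bf mem_filter => /andP[].
have FB : forall b, b \in F -> exists j, b \in B j.
  by move=> b; rewrite /F F_mem => /existsP.
have BF : forall j b, b \in B j -> b \in F.
  by move=> j b bB; rewrite /F F_mem; apply/existsP; exists j.
set t := c i0 p / alpha i0 p.
have t_gt0 : 0 < t by rewrite divr_gt0 // hpos.
pose d a := c i0 a - t * alpha i0 a.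
pose coef j := if j == i0 then d else c j.
have hyB : forall j, y j = \sum_(b <- B j) coef j b *: b.
  move=> j; rewrite /coef /B /Bf /r; case: ifP => [/eqP->|_].
    rewrite -drop_zero //; last by rewrite /d /t divfK ?subrr // gt_eqF ?hpos.
    rewrite hy; under [RHS]eq_bigr do rewrite scalerBl -scalerA.
    by rewrite sumrB -scaler_sumr hrel scaler0 subr0.
    exact: (haff i0).1.
  by rewrite -drop_zero // ?hy //; exact: (haff j).1.
pose e b := \sum_(j < k) (if b \in B j then coef j b else 0).
have he : forall j b, b \in B j -> e b = coef j b.
  move=> j b bB; rewrite /e (bigD1 j) //= bB big1 ?addr0 // => l lj.
  case: ifP => // bl; have jl : j != l by rewrite eq_sym.
  by have := hdisj jl (BX _ _ bB); rewrite (BX _ _ bl).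
have hxF : x = \sum_(b <- F) e b *: b.
  rewrite /F F_sum hx; apply: eq_bigr => j _.
  by rewrite hyB; apply: eq_big_seq => b bB; rewrite (he j).
have xF : x \notin F.
  apply/negP => /FB [j /BX xj]; move: (xnot j); rewrite memv_span //.
pose A := x :: F.
have uA : uniq A by rewrite /A /= xF Fu.
have sA : size A = n.+1 by rewrite /A /= Fs.
have subA : {subset A <= X}.
  move=> a; rewrite in_cons => /orP[/eqP->//|/FB [j /BX]]; exact: hsub.
have gA := hgood uA sA subA.
have b1F : b1 \in B j1.
  rewrite /B /Bf mem_filter b1X andbT /= /r (negbTE j1i0).
  by apply: contraTneq cb1 => ->; rewrite hcq ltxx.
have eb1 : e b1 = c j1 b1 by rewrite (he _ _ b1F) /coef (negbTE j1i0).
case: (classic (in_conv A 0)) => [hconv|hnconv].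
  have [f [f0 f1 fv]] := conv_fun uA hconv.
  have H0 : \sum_(b <- F) (f x * e b + f b) *: b = 0.
    under eq_bigr do rewrite scalerDl -scalerA.
    by rewrite big_split /= -scaler_sumr -hxF [RHS]fv big_cons.
  have Hz := Fi _ H0.
  have := Hz b1 (BF _ _ b1F); rewrite eb1 => hb1.
  have fb1 := f0 b1; have fx := f0 x.
  have fx0 : f x = 0 by nra.
  move: f1; rewrite /A big_cons fx0 add0r big_seq big1 => [/eqP|b bF].
    by rewrite eq_sym oner_eq0.
  by have := Hz b bF; rewrite fx0 mul0r add0r.
case: (classic (exists a, a \in A /\ in_pos (filter (predC1 a) A) a)); last first.
  by move=> H; case: gA; split => // a aA hp; apply: H; exists a.
move=> [a [aA hpa]].
have q0B : q i0 \in B i0.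
  rewrite /B /Bf mem_filter hq andbT /= /r eqxx.
  by apply: contraTneq cp => <-; rewrite hcq ltxx.
move: aA; rewrite in_cons => /orP[/eqP ax | aF].
  move: hpa; rewrite ax /A /= eqxx /=.
  have -> : filter (predC1 x) F = F.
    apply/all_filterP/allP => b bF /=; apply/eqP => bx.
    by move: xF; rewrite -bx bF.
  move=> /(pos_fun Fu) [g [g0 gv]].
  have H0 : \sum_(b <- F) (e b - g b) *: b = 0.
    under eq_bigr do rewrite scalerBl.
    by rewrite sumrB -hxF -gv subrr.
  have := Fi _ H0 _ (BF _ _ q0B).
  rewrite (he _ _ q0B) /coef eqxx /d hcq.
  have := g0 (q i0); have := hpos (hq i0); nra.
have xa : x != a by apply: contraNneq xF => ->.
have hfA : filter (predC1 a) A = x :: filter (predC1 a) F by rewrite /A /= xa.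
move: hpa; rewrite hfA.
have uA' : uniq (x :: filter (predC1 a) F).
  by rewrite /= mem_filter negb_and xF orbT filter_uniq.
move=> /(pos_fun uA') [f [f0 fv]].
have sa : a = \sum_(b <- F) (if b == a then 1 else 0) *: b.
  rewrite (bigD1_seq a) //= eqxx scale1r big1 ?addr0 // => b /negbTE ->.
  by rewrite scale0r.
have sf : \sum_(b <- F) (if b != a then f b else 0) *: b =
          \sum_(b <- filter (predC1 a) F) f b *: b.
  rewrite big_filter [RHS]big_mkcond; apply: eq_bigr => b _ /=.
  by case: ifP => _ //; rewrite scale0r.
have H0 : \sum_(b <- F) (f x * e b + (if b != a then f b else 0)
                        - (if b == a then 1 else 0)) *: b = 0.
  under eq_bigr do rewrite scalerBl scalerDl -scalerA.
  rewrite sumrB big_split /= -scaler_sumr -hxF -sa sf.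
  by apply/eqP; rewrite subr_eq0; apply/eqP; rewrite [RHS]fv big_cons.
have Hz := Fi _ H0.
have hfa : f x * e a = 1.
  by move: (Hz a aF); rewrite eqxx /=; lra.
have fx_gt0 : 0 < f x.
  rewrite lt_def f0 andbT; apply/eqP => h; move: hfa; rewrite h mul0r => /eqP.
  by rewrite eq_sym oner_eq0.
exists a => j ji0 b bX ba.
case: (altP (b =P q j)) => [->|bq]; first exact: hcq.
have bB : b \in B j by rewrite /B /Bf mem_filter /= /r (negbTE ji0) bq.
have := Hz b (BF _ _ bB); rewrite (he _ _ bB) /coef (negbTE ji0) ba (negbTE ba) /=.
have := hc bX; have := f0 b => h1 h2 h3.
apply/eqP; rewrite eq_le; apply/andP; split; nra.
Qed.

End Core.
Lemma single (R : realType) (n : nat) (A : seq 'rV[R]_n) (c : 'rV[R]_n -> R) (s y : 'rV[R]_n) :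
  uniq A -> (forall b, b \in A -> b != s -> c b = 0) ->
  y = \sum_(b <- A) c b *: b -> y != 0 -> s \in A /\ y = c s *: s.
Proof.
move=> uA H hy yn0.
have sA : s \in A.
  apply: contraNT yn0 => sA; rewrite hy big_seq big1 // => b bA.
  by rewrite H ?scale0r //; apply: contraNneq sA => <-.
split=> //; rewrite hy (bigD1_seq s) //= big_seq_cond big1 ?addr0 // => b /andP[bA bs].
by rewrite H ?scale0r.
Qed.

Unset Implicit Arguments.

Theorem proposition5p1 (R : realType) (n : nat) (X : seq 'rV[R]_n)
  (k : nat) (Xs : 'I_k -> seq 'rV[R]_n) :
  standing X -> skeleton X Xs ->
  forall x, x \in X -> (forall i, x \notin <<Xs i>>%VS) ->
  exists i j : 'I_k, i != j /\
    exists xi, exists xj, [/\ xi \in Xs i, xj \in Xs j & in_pos [:: xi; xj] x].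
Proof.
move=> [h0X _ _ hgood] [hsub hdisj hsk hfull hdir] x xX xnot.
have uX : forall i, uniq (Xs i) by move=> i; exact: (hsk i).1.1.
have [alpha Halpha] : exists alpha : 'I_k -> 'rV[R]_n -> R, forall i,
    (forall a, a \in Xs i -> 0 < alpha i a) /\ \sum_(a <- Xs i) alpha i a *: a = 0.
  apply: (@fchoice _ _ (fun i al => (forall a, a \in Xs i -> 0 < al a) /\
     \sum_(a <- Xs i) al a *: a = 0)) => i.
  exact: (relint_pos (uX i) (hsk i).2).2.
have hpos : forall i a, a \in Xs i -> 0 < alpha i a by move=> i; exact: (Halpha i).1.
have hrel : forall i, \sum_(a <- Xs i) alpha i a *: a = 0 by move=> i; exact: (Halpha i).2.
have haff : forall i, aff_indep (Xs i) by move=> i; exact: (hsk i).1.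
have : x \in (\sum_(i < k) <<Xs i>>)%VS by rewrite hfull memvf.
move=> /memv_sumP [ys Hys hxs].
have [qc Hqc] : exists qc : 'I_k -> 'rV[R]_n * ('rV[R]_n -> R), forall i,
    [/\ (qc i).1 \in Xs i, (forall a, a \in Xs i -> 0 <= (qc i).2 a),
        (qc i).2 (qc i).1 = 0 & ys i = \sum_(a <- Xs i) (qc i).2 a *: a].
  apply: (@fchoice _ _ (fun i qc => [/\ qc.1 \in Xs i, (forall a, a \in Xs i -> 0 <= qc.2 a),
        qc.2 qc.1 = 0 & ys i = \sum_(a <- Xs i) qc.2 a *: a])) => i.
  have [c0 hc0] := span_fun (uX i) (Hys i isT).
  have Xn0 : Xs i != [::].
    by case: (relint_pos (uX i) (hsk i).2); case: (Xs i).
  have [q [c' [qX c'0 c'q e]]] := facet_cone c0 (uX i) (hpos i) (hrel i) Xn0.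
  by exists (q, c'); split => //; rewrite hc0.
pose q i := (qc i).1; pose c i := (qc i).2.
have hq : forall i, q i \in Xs i by move=> i; case: (Hqc i).
have hc : forall i a, a \in Xs i -> 0 <= c i a by move=> i; case: (Hqc i).
have hcq : forall i, c i (q i) = 0 by move=> i; case: (Hqc i).
have hy : forall i, ys i = \sum_(a <- Xs i) c i a *: a by move=> i; case: (Hqc i).
have Core := core haff hpos hrel hfull hdir hsub hdisj hgood xX xnot hq hc hcq hy hxs.
have [i0 yi0] : exists i0, ys i0 != 0.
  apply: NNPP => H; move: h0X; rewrite -(_ : x = 0) ?xX //.
  rewrite hxs big1 // => i _; apply/eqP; apply: NNPP => /negP h; apply: H; by exists i.
have [j [ji0 yj]] : exists j, j != i0 /\ ys j != 0.
  apply: NNPP => H; move: (xnot i0); rewrite (_ : x = ys i0) ?Hys //.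
  rewrite hxs (bigD1 i0) //= big1 ?addr0 // => l li0; apply/eqP; apply: NNPP => /negP h.
  by apply: H; exists l.
have [s1 Hs1] := Core _ _ ji0 yj yi0.
have ij : i0 != j by rewrite eq_sym.
have [s2 Hs2] := Core _ _ ij yi0 yj.
have [s1X ys1] := single (uX j) (Hs1 j ji0) (hy j) yj.
have [s2X ys2] := single (uX i0) (Hs2 i0 ij) (hy i0) yi0.
have others : forall l, l != i0 -> l != j -> ys l = 0.
  move=> l li0 lj; apply/eqP; apply: NNPP => /negP yl.
  have [s1l _] := single (uX l) (Hs1 l li0) (hy l) yl.
  by have := hdisj _ _ (lj : l != j) _ s1l; rewrite s1X.
exists i0, j; split => //; exists s2, s1; split => //.
apply: (pos2 (hc _ _ s2X) (hc _ _ s1X)).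
rewrite hxs (bigD1 i0) //= (bigD1 j) //= big1 ?addr0 -?ys1 -?ys2 //.
by move=> l /andP[li0 lj]; apply: others.
Qed.
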